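(* There is an absolute constant $C$ such that for every anticommuting family $e_1,\dots,e_k\in\mathbb{C}^{n\times n}$ we have $\sum_{i=1}^k \mathrm{rk}(e_i^2)\le Cn^2$.
   Context: A family $e_1,\dots,e_k$ of complex $n\times n$ matrices is called anticommuting if $e_ie_j=-e_je_i$ for all distinct $i,j\in\{1,\dots,k\}$. $\mathrm{rk}$ denotes matrix rank. *)

(* Defs.v *)
From HB Require Import structures.
From mathcomp Require Import all_boot all_order all_algebra all_field.
Set Implicit Arguments. Unset Strict Implicit. Unset Printing Implicit Defensive.
Import GRing.Theory.
Local Open Scope ring_scope.

Definition anticommuting (n k : nat) (e : 'I_k -> 'M[algC]_n) : Prop :=
  forall i j : 'I_k, i != j -> e i *m e j = - (e j *m e i).

(* Main.v *)
Require Import Defs.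
From HB Require Import structures.
From mathcomp Require Import all_boot all_order all_algebra all_field.
Import GRing.Theory Num.Theory.
Local Open Scope ring_scope.
Lemma exists_nonroot (p : {poly algC}) : p != 0 -> exists t, ~~ root p t.
Proof.
move=> p0.
pose rs := [seq i%:R : algC | i <- iota 0 (size p)].
have urs : uniq rs.
  rewrite map_inj_uniq ?iota_uniq // => i j /eqP; rewrite eqr_nat => /eqP.
  done.
have : ~~ all (root p) rs.
  apply/negP => hall; have := max_poly_roots p0 hall urs.
  by rewrite size_map size_iota ltnn.
case/allPn => t _ ht; by exists t.
Qed.

Lemma good_vec n (s : seq 'rV[algC]_n) : all (fun w => w != 0) s ->
  exists v : 'cV_n, all (fun w => (w *m v) 0 0 != 0) s.
Proof.
pose pw (w : 'rV[algC]_n) := \poly_(q < n) odflt 0 (omap (w 0) (insub q)).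
have pw0 w : w != 0 -> pw w != 0.
  apply: contra_neq => h; apply/matrixP => i j; rewrite (ord1 i) mxE.
  by have := congr1 (fun p : {poly algC} => p`_j) h; rewrite /= coef_poly ltn_ord coef0 valK.
move=> hs.
have P0 : \prod_(w <- s) pw w != 0.
  rewrite prodf_seq_neq0; apply/allP => w ws /=; apply: pw0.
  exact: (allP hs).
have [t ht] := exists_nonroot _ P0.
exists (\col_q t ^+ q); apply/allP => w ws.
have : (pw w).[t] != 0.
  move: ht; rewrite /root horner_prod prodf_seq_neq0 => /allP /(_ w ws).
  by [].
rewrite /pw horner_poly mxE.
suff -> : \sum_j w 0 j * (\col_q t ^+ q) j 0 =
   \sum_(i < n) odflt 0 (omap (w 0) (insub (nat_of_ord i))) * t ^+ i by [].
by apply: eq_bigr => i _; rewrite mxE valK.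
Qed.
Theorem mainTheorem3 :
  exists C : nat, forall (n k : nat) (e : 'I_k -> 'M[algC]_n),
    anticommuting e ->
    (\sum_(i < k) \rank (e i *m e i) <= C * n ^ 2)%N.
Proof.
exists 2%N => n k e he.
pose f i := e i *m e i.
pose s1 := [seq r <- [seq row p (f i) | i <- enum 'I_k, p <- enum 'I_n] | r != 0].
have [v hv] : exists v : 'cV_n, all (fun w => (w *m v) 0 0 != 0) s1.
  by apply: good_vec; apply/allP => r; rewrite mem_filter => /andP[].
have hfv i : f i != 0 -> f i *m v != 0.
  move=> fi0.
  case: (pickP (fun p => row p (f i) != 0)) => [p hp | h]; last first.
    have fz : f i = 0.
      by apply/row_matrixP => p; rewrite row0; apply/eqP; exact: negbFE (h p).
    by rewrite fz eqxx in fi0.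
  have : row p (f i) \in s1.
    by rewrite mem_filter hp /=; apply/allpairsP; exists (i, p); rewrite !mem_enum.
  move/(allP hv) => /=; rewrite -row_mul; apply: contra_neq => ->.
  by rewrite row0 mxE.
pose s2 := [seq x <- [seq (f i *m v)^T | i <- enum 'I_k] | x != 0].
have [w hw] : exists w : 'cV_n, all (fun x => (x *m w) 0 0 != 0) s2.
  by apply: good_vec; apply/allP => r; rewrite mem_filter => /andP[].
pose u := w^T.
pose d i := (u *m f i *m v) 0 0.
have hd i : f i != 0 -> d i != 0.
  move=> fi0.
  have : (f i *m v)^T \in s2.
    rewrite mem_filter; apply/andP; split; last by apply/mapP; exists i; rewrite ?mem_enum.
    by rewrite trmx_eq0 hfv.
  move/(allP hw) => /=.
  by rewrite -[w]trmxK -trmx_mul mxE /d /u mulmxA.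
pose sc (X : 'M[algC]_n) := (u *m X *m v) 0 0.
pose U : 'M[algC]_(k, n) := \matrix_(i, p) (u *m e i) 0 p.
pose V : 'M[algC]_(n, k) := \matrix_(p, j) (e j *m v) p 0.
pose M := U *m V.
have hM i j : M i j = sc (e i *m e j).
  rewrite /sc !mulmxA -(mulmxA (u *m e i)) [RHS]mxE [LHS]mxE.
  by apply: eq_bigr => p _; rewrite !mxE.
pose D := M + M^T.
have hD i j : D i j = (d i *+ 2) *+ (i == j).
  have -> : D i j = M i j + M j i.
    by rewrite /D !mxE.
  rewrite !hM.
  have -> : sc (e i *m e j) + sc (e j *m e i) = sc (e i *m e j + e j *m e i).
    by rewrite /sc mulmxDr mulmxDl !mxE.
  case: eqVneq => [<- | nij]; first by rewrite ?eqxx mulr1n mulr2n /d /f /sc mulmxDr mulmxDl !mxE.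
  by rewrite (he _ _ nij) addNr /sc mulmx0 mul0mx mxE.
pose J := [set i | f i != 0].
pose g : 'I_#|J| -> 'I_k := enum_val.
have hsub : mxsub g g D = diag_mx (\row_a (d (g a) *+ 2)).
  apply/matrixP => a b; rewrite [LHS]mxE hD (inj_eq enum_val_inj) !mxE.
  by [].
have rk1 : (#|J| <= \rank D)%N.
  have : \rank (mxsub g g D) = #|J|.
    apply: mxrank_unit; rewrite hsub unitmxE det_diag unitfE.
    apply/prodf_neq0 => a _; rewrite mxE mulrn_eq0 /=.
    by apply: hd; have := enum_valP a; rewrite inE.
  move <-.
  rewrite -[D]mulmx1 mxsub_mul.
  apply: leq_trans (mxrankM_maxl _ _) _.
  by rewrite mulmx1; exact: mxrankS (rowsub_sub _ _).
have rk2 : (\rank D <= 2 * n)%N.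
  apply: leq_trans (mxrank_add _ _) _.
  rewrite mxrank_tr addnn -mul2n leq_mul2l /=.
  apply: leq_trans (mxrankM_maxl _ _) _.
  exact: rank_leq_col.
have hJ : (#|J| <= 2 * n)%N := leq_trans rk1 rk2.
have -> : (\sum_(i < k) \rank (e i *m e i) = \sum_(i in J) \rank (f i))%N.
  rewrite [RHS]big_mkcond; apply: eq_bigr => i _; rewrite inE /f.
  by case: eqP => // ->; rewrite mxrank0.
apply: leq_trans (_ : \sum_(i in J) n <= _)%N.
  by apply: leq_sum => i _; exact: rank_leq_row.
rewrite sum_nat_const expnS expn1 mulnA leq_mul2r hJ orbT.
done.
Qed.
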